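(* In the setting of the context, for every iteration $k\geq 0$, every batch size $m\in\{1,\dots,|\mathrm{OD}|\}$ and every step size $\gamma_k\in[0,1]$, the iterates of the batched SOFW method satisfy \[ \mathbb{E}\bigl[\Psi(\Theta x_{k+1})\,\big|\,x_k\bigr]\;\leq\;\Psi(\Theta x_k)-\frac{\gamma_k}{|\mathrm{OD}|}\,g(x_k)+\frac{\gamma_k^2}{2|\mathrm{OD}|}\,C^{\otimes}_\Psi, \] where $g(x)=\sum_{w\in\mathrm{OD}}g^{(w)}(x)$ and $g^{(w)}(x)=\max_{s\in\mathcal{X}^{(w)}}\langle\nabla\Psi(\Theta x),\,\Theta(x^{[w]}-s^{[w]})\rangle$ is the block Frank–Wolfe gap. In particular the right-hand side does not depend on $m$.
   Context: Let $\mathcal{G}=(\mathcal{V},\mathcal{E})$ be a finite directed graph. Let $\mathrm{OD}$ be a finite nonempty set of origin–destination pairs $w=(i,j)$ with $i,j\in\mathcal{V}$, each with a demand $d_w>0$. For each $w\in\mathrm{OD}$ let $\mathcal{P}_w$ be a finite nonempty set of directed paths from $i$ to $j$, and let $\mathcal{P}=\bigsqcup_w \mathcal{P}_w$. A path-flow vector $x\in\mathbb{R}^{|\mathcal{P}|}$ is written as a concatenation of blocks $x=(x^{(w)})_{w\in\mathrm{OD}}$ with $x^{(w)}\in\mathbb{R}^{|\mathcal{P}_w|}$. The feasible set is the product $\mathcal{X}=\prod_{w}\mathcal{X}^{(w)}$, where $\mathcal{X}^{(w)}=\{x^{(w)}\geq 0 : \sum_{p\in\mathcal{P}_w}x_p=d_w\}$.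 Let $\Theta\in\{0,1\}^{|\mathcal{E}|\times|\mathcal{P}|}$ be the edge–path incidence matrix ($\Theta_{e,p}=1$ iff edge $e$ lies on path $p$), so edge flows are $F(x)=\Theta x$. Let $\Psi:\mathbb{R}^{|\mathcal{E}|}\to\mathbb{R}$ be convex and continuously differentiable. Lifting notation: for $w\in\mathrm{OD}$ and $x\in\mathbb{R}^{|\mathcal{P}|}$, $x^{[w]}\in\mathbb{R}^{|\mathcal{P}|}$ denotes the vector that agrees with $x$ on the coordinates indexed by $\mathcal{P}_w$ and is zero elsewhere; similarly, for $s^{(w)}\in\mathcal{X}^{(w)}$, $s^{[w]}$ is its zero-padded lift to $\mathbb{R}^{|\mathcal{P}|}$. Block curvature constants: for $w\in\mathrm{OD}$, \[ C^{(w)}_\Psi := \sup\frac{2}{\gamma^2}\Bigl[\Psi(\Theta y)-\Psi(\Theta x)-\langle\nabla\Psi(\Theta x),\,\Theta(y-x)\rangle\Bigr], \] the supremum over $x\in\mathcal{X}$, $s^{(w)}\in\mathcal{X}^{(w)}$, $\gamma\in(0,1]$, with $y=x+\gamma(s^{[w]}-x^{[w]})$; these are assumed finite, and $C^{\otimes}_\Psi:=\sum_{w\in\mathrm{OD}}C^{(w)}_\Psi$. Batched SOFW method: given $x_k\in\mathcal{X}$, draw $\mathcal{I}_k\subset\mathrm{OD}$ uniformly at random among all subsets of size $m$, independently of the past. For each $w\in\mathcal{I}_k$ choose $s_k^{(w)}\in\arg\min_{s\in\mathcal{X}^{(w)}}\langle\nabla\Psi(\Theta x_k),\Theta s^{[w]}\rangle$.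 Set $d_k=\frac1m\sum_{w\in\mathcal{I}_k}(s_k^{[w]}-x_k^{[w]})$ and $x_{k+1}=x_k+\gamma_k d_k$. *)

(* Defs.v *)
From HB Require Import structures.
From mathcomp Require Import all_boot all_order all_algebra.
From mathcomp Require Import all_classical all_reals all_analysis.
Unset Printing Implicit Defensive.
Import Order.TTheory GRing.Theory Num.Theory numFieldNormedType.Exports.
Local Open Scope classical_set_scope.
Local Open Scope ring_scope.

Fixpoint is_dpath {V : finType} {ne : nat} (tl hd : 'I_ne -> V)
    (i j : V) (s : seq 'I_ne) : bool :=
  match s with
  | [::] => i == j
  | e :: s' => (tl e == i) && is_dpath tl hd (hd e) j s'
  end.

(* Edge--path incidence applied to a path flow: F(x) = Theta x. *)
Definition Theta {R : realType} {ne : nat} {P : finType} (pe : P -> seq 'I_ne)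
    (x : P -> R) : 'rV[R]_ne :=
  \row_(e < ne) \sum_(p : P) (e \in pe p)%:R * x p.

Definition ip {R : realType} {ne : nat} (a b : 'rV[R]_ne) : R :=
  \sum_(e < ne) a 0 e * b 0 e.

Definition grad {R : realType} {ne : nat} (Psi : 'rV[R]_ne -> R)
    (y : 'rV[R]_ne) : 'rV[R]_ne :=
  \row_(e < ne) ('D_(delta_mx 0 e) Psi y).

Definition lift {R : realType} {W P : finType} (pod : P -> W) (w : W)
    (x : P -> R) : P -> R :=
  fun p => if pod p == w then x p else 0.

(* Block feasibility: the block-w coordinates of s form an element of X^{(w)}
   (coordinates outside block w are irrelevant; only lift w s is used). *)
Definition inXw {R : realType} {W P : finType} (pod : P -> W) (d : W -> R)
    (w : W) (s : P -> R) : Prop :=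
  (forall p, pod p = w -> 0 <= s p) /\ \sum_(p | pod p == w) s p = d w.

Definition inX {R : realType} {W P : finType} (pod : P -> W) (d : W -> R)
    (x : P -> R) : Prop :=
  forall w, inXw pod d w x.

Definition curv_set {R : realType} {ne : nat} {W P : finType} (pod : P -> W)
    (pe : P -> seq 'I_ne) (d : W -> R) (Psi : 'rV[R]_ne -> R) (w : W) : set R :=
  [set r | exists x s (g : R),
      [/\ inX pod d x, inXw pod d w s, 0 < g, g <= 1 &
       let y := fun p => x p + g * (lift pod w s p - lift pod w x p) in
       r = 2 / g ^+ 2 * (Psi (Theta pe y) - Psi (Theta pe x)
             - ip (grad Psi (Theta pe x)) (Theta pe (fun p => y p - x p)))]].

Definition curv {R : realType} {ne : nat} {W P : finType} (pod : P -> W)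
    (pe : P -> seq 'I_ne) (d : W -> R) (Psi : 'rV[R]_ne -> R) (w : W) : R :=
  sup (curv_set pod pe d Psi w).

(* Block Frank--Wolfe gap g^{(w)}(x) (a max over the compact X^{(w)}, written
   as a supremum). *)
Definition fwgap_blk {R : realType} {ne : nat} {W P : finType} (pod : P -> W)
    (pe : P -> seq 'I_ne) (d : W -> R) (Psi : 'rV[R]_ne -> R) (x : P -> R)
    (w : W) : R :=
  sup [set r | exists s, inXw pod d w s /\
        r = ip (grad Psi (Theta pe x))
               (Theta pe (fun p => lift pod w x p - lift pod w s p))].

Definition fwgap {R : realType} {ne : nat} {W P : finType} (pod : P -> W)
    (pe : P -> seq 'I_ne) (d : W -> R) (Psi : 'rV[R]_ne -> R) (x : P -> R) : R :=
  \sum_(w : W) fwgap_blk pod pe d Psi x w.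

Definition is_lmo {R : realType} {ne : nat} {W P : finType} (pod : P -> W)
    (pe : P -> seq 'I_ne) (d : W -> R) (Psi : 'rV[R]_ne -> R) (x : P -> R)
    (w : W) (s : P -> R) : Prop :=
  inXw pod d w s /\
  forall s', inXw pod d w s' ->
    ip (grad Psi (Theta pe x)) (Theta pe (lift pod w s))
    <= ip (grad Psi (Theta pe x)) (Theta pe (lift pod w s')).

Definition sofw_dir {R : realType} {W P : finType} (pod : P -> W) (m : nat)
    (I : {set W}) (s : W -> P -> R) (x : P -> R) : P -> R :=
  fun p => m%:R^-1 * \sum_(w in I) (lift pod w (s w) p - lift pod w x p).

(* Main.v *)
Require Import Defs.
From HB Require Import structures.
From mathcomp Require Import all_boot all_order all_algebra.
From mathcomp Require Import all_classical all_reals all_analysis.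
From mathcomp Require Import ring lra.
Import Order.TTheory GRing.Theory Num.Theory numFieldNormedType.Exports.
Local Open Scope ring_scope.

Section Aux.
Variable R : realType.

Lemma Theta_sum (ne : nat) (P I : finType) (pe : P -> seq 'I_ne)
   (r : seq I) (a : I -> R) (f : I -> P -> R) :
  Theta pe (fun p => \sum_(i <- r) a i * f i p)
  = \sum_(i <- r) a i *: Theta pe (f i).
Proof.
apply/rowP => e; rewrite mxE summxE.
under eq_bigr do rewrite mulr_sumr.
rewrite exchange_big; apply: eq_bigr => i _.
rewrite !mxE mulr_sumr; apply: eq_bigr => p _; ring.
Qed.

Lemma ThetaB (ne : nat) (P : finType) (pe : P -> seq 'I_ne) (f g : P -> R) :
  Theta pe (fun p => f p - g p) = Theta pe f - Theta pe g.
Proof.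
apply/rowP => e; rewrite !mxE -sumrB; apply: eq_bigr => p _; ring.
Qed.

Lemma ThetaZ (ne : nat) (P : finType) (pe : P -> seq 'I_ne) c (f : P -> R) :
  Theta pe (fun p => c * f p) = c *: Theta pe f.
Proof.
apply/rowP => e; rewrite !mxE mulr_sumr; apply: eq_bigr => p _; ring.
Qed.

Lemma ipB (ne : nat) (a u v : 'rV[R]_ne) : ip a (u - v) = ip a u - ip a v.
Proof. rewrite /ip -sumrB; apply: eq_bigr => e _; rewrite !mxE; ring. Qed.

Lemma ipZ (ne : nat) (a u : 'rV[R]_ne) c : ip a (c *: u) = c * ip a u.
Proof. rewrite /ip mulr_sumr; apply: eq_bigr => e _; rewrite !mxE; ring. Qed.

Lemma jensen (ne : nat) (Psi : 'rV[R]_ne -> R) (I : eqType)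
  (hconv : forall (a b : 'rV[R]_ne) (t : R), 0 <= t -> t <= 1 ->
     Psi (t *: a + (1 - t) *: b) <= t * Psi a + (1 - t) * Psi b)
  (r : seq I) (a : I -> R) (z : I -> 'rV[R]_ne) :
  (forall i, i \in r -> 0 <= a i) -> \sum_(i <- r) a i = 1 ->
  Psi (\sum_(i <- r) a i *: z i) <= \sum_(i <- r) a i * Psi (z i).
Proof.
elim: r a => [|i r IH] a ha hs.
  by move: hs; rewrite big_nil => /eqP; rewrite eq_sym oner_eq0.
move: hs; rewrite !big_cons => hs.
have hr : forall j, j \in r -> 0 <= a j by move=> j hj; apply: ha; rewrite inE hj orbT.
have S0 : 0 <= \sum_(j <- r) a j by rewrite big_seq; apply: sumr_ge0 => j /hr.
have ai : a i = 1 - \sum_(j <- r) a j by rewrite -hs; ring.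
have [Sz|Sp] := eqVneq (\sum_(j <- r) a j) 0.
  have hz : forall j, j \in r -> a j = 0.
    move=> j hj; move: Sz; rewrite big_seq => /eqP.
    rewrite psumr_eq0; last by move=> k /hr.
    by move=> /allP /(_ j hj) /implyP /(_ hj) /eqP.
  have e1 : \sum_(j <- r) a j *: z j = 0.
    by rewrite big_seq big1 // => j /hz ->; rewrite scale0r.
  have e2 : \sum_(j <- r) a j * Psi (z j) = 0.
    by rewrite big_seq big1 // => j /hz ->; rewrite mul0r.
  rewrite e1 e2 ai Sz subr0 scale1r mul1r !addr0.
  by [].
have Spos : 0 < \sum_(j <- r) a j by rewrite lt_def Sp S0.
set S := \sum_(j <- r) a j in ai Spos Sp S0 hs *.
have e1 : \sum_(j <- r) a j *: z j = S *: \sum_(j <- r) (a j / S) *: z j.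
  rewrite scaler_sumr; apply: eq_bigr => j _; rewrite scalerA; congr (_ *: _).
  by rewrite mulrCA mulfV ?mulr1.
have e2 : \sum_(j <- r) a j * Psi (z j) = S * \sum_(j <- r) (a j / S) * Psi (z j).
  rewrite mulr_sumr; apply: eq_bigr => j _; rewrite mulrA; congr (_ * _).
  by rewrite mulrCA mulfV ?mulr1.
have key : Psi (\sum_(j <- r) (a j / S) *: z j) <= \sum_(j <- r) (a j / S) * Psi (z j).
  apply: IH.
  - by move=> j hj; rewrite divr_ge0 // ?hr // ltW.
  - by rewrite -mulr_suml mulfV.
rewrite e1 e2.
set B := \sum_(j <- r) (a j / S) *: z j in key *.
set C := \sum_(j <- r) (a j / S) * Psi (z j) in key *.
have hS1 : S = 1 - a i by rewrite ai; ring.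
rewrite hS1.
apply: le_trans (hconv _ _ _ _ _) _.
- by apply: ha; rewrite inE eqxx.
- by rewrite ai lerBlDr lerDl.
rewrite lerD2l ler_pM2l // -hS1.
exact: Spos.
Qed.
End Aux.

Lemma subC1_notin (W : finType) (I : {set W}) w :
  (I \subset [set~ w]) = (w \notin I).
Proof.
apply/fintype.subsetP/idP => [h|h v hv].
  by apply/negP => /h; rewrite !inE eqxx.
by rewrite !inE; apply: contraNneq h => <-.
Qed.

Lemma cnt (W : finType) (m : nat) (w : W) : (1 <= m)%N ->
  (\sum_(I : {set W} | #|I| == m) (w \in I : nat))%N = 'C(#|W|.-1, m.-1).
Proof.
move=> hm.
have h1 : (\sum_(I : {set W} | #|I| == m) 1)%N = 'C(#|W|, m).
  by rewrite sum1dep_card card_draws.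
have h2 : (\sum_(I : {set W} | #|I| == m) (w \notin I : nat))%N = 'C(#|W|.-1, m).
  rewrite -(cardsC1 w) -cards_draws -sum1dep_card big_mkcond [RHS]big_mkcond.
  apply: eq_bigr => I _; rewrite subC1_notin.
  by case: (#|I| == m); case: (w \in I).
have h3 : (\sum_(I : {set W} | #|I| == m) 1)%N =
   (\sum_(I : {set W} | #|I| == m) (w \in I : nat) +
    \sum_(I : {set W} | #|I| == m) (w \notin I : nat))%N.
  by rewrite -big_split; apply: eq_bigr => I _; case: (w \in I).
have hW : (0 < #|W|)%N by apply/card_gt0P; exists w.
move: h3; rewrite h1 h2.
case: #|W| hW => [//|n] _; case: m hm {h1 h2} => [//|k] _ /=.
rewrite binS addnC => h; apply/eqP; move/eqP: h; rewrite eqn_add2r eq_sym.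
by [].
Qed.
Theorem mainTheorem2
  (R : realType)
  (* directed graph: vertices V, edges 'I_ne with tail tl and head hd *)
  (V : finType) (ne : nat) (tl hd : 'I_ne -> V)
  (* OD pairs w = (orig w, dest w), demands d *)
  (W : finType) (orig dest : W -> V) (d : W -> R)
  (* paths: each path p belongs to block pod p and has edge list pe p *)
  (P : finType) (pod : P -> W) (pe : P -> seq 'I_ne)
  (Psi : 'rV[R]_ne -> R)
  (* the OD set is nonempty, a set of vertex pairs, with positive demands *)
  (hW0 : (0 < #|W|)%N)
  (hOD : injective (fun w => (orig w, dest w)))
  (hd0 : forall w, 0 < d w)
  (* E is a set of vertex pairs *)
  (hE : injective (fun e => (tl e, hd e)))
  (* P_w is a finite nonempty set of directed paths from orig w to dest w *)
  (hPne : forall w, exists p, pod p = w)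
  (hPpath : forall p, is_dpath tl hd (orig (pod p)) (dest (pod p)) (pe p))
  (hPinj : injective pe)
  (* Psi convex and continuously differentiable *)
  (hconv : forall (a b : 'rV[R]_ne) (t : R), 0 <= t -> t <= 1 ->
     Psi (t *: a + (1 - t) *: b) <= t * Psi a + (1 - t) * Psi b)
  (hdiff : forall y, differentiable Psi y)
  (hC1 : continuous (grad Psi))
  (* block curvature constants are finite *)
  (hCfin : forall w, has_ubound (curv_set pod pe d Psi w))
  (* current iterate x_k, batch size m, step size gamma_k *)
  (x : P -> R) (hx : inX pod d x)
  (m : nat) (hm1 : (1 <= m)%N) (hm2 : (m <= #|W|)%N)
  (gamma : R) (hg0 : 0 <= gamma) (hg1 : gamma <= 1)
  (* oracle choices s I w (allowed to depend on the drawn batch I) *)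
  (s : {set W} -> W -> P -> R)
  (hs : forall (I : {set W}) w, w \in I -> is_lmo pod pe d Psi x w (s I w)) :
  (* E[Psi(Theta x_{k+1}) | x_k]: I_k uniform among subsets of size m *)
  (\sum_(I : {set W} | #|I| == m)
      Psi (Theta pe (fun p => x p + gamma * sofw_dir pod m I (s I) x p)))
    / #|[set I : {set W} | #|I| == m]|%:R
  <= Psi (Theta pe x) - gamma / #|W|%:R * fwgap pod pe d Psi x
     + gamma ^+ 2 / (2 * #|W|%:R) * \sum_(w : W) curv pod pe d Psi w.

Proof.
set G := grad Psi (Theta pe x).
pose h w := Psi (Theta pe x) - gamma * fwgap_blk pod pe d Psi x w
            + gamma ^+ 2 / 2 * curv pod pe d Psi w.
have stepA : forall (I : {set W}) w, w \in I ->
    Psi (Theta pe (fun p => x p + gamma * (Defs.lift pod w (s I w) p - Defs.lift pod w x p)))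
    <= h w.
  move=> I w wI; have [hSw hlmo] := hs I w wI.
  set S := s I w in hSw hlmo *.
  set y := fun p => x p + gamma * (Defs.lift pod w S p - Defs.lift pod w x p).
  have hyx : Theta pe (fun p => y p - x p)
      = gamma *: Theta pe (fun p => Defs.lift pod w S p - Defs.lift pod w x p).
    by rewrite -ThetaZ; congr (Theta pe _); apply/funext => p; rewrite /y; ring.
  set a := ip G (Theta pe (fun p => Defs.lift pod w S p - Defs.lift pod w x p)).
  have gap : fwgap_blk pod pe d Psi x w <= - a.
    apply: ge_sup.
      by exists (ip G (Theta pe (fun p => Defs.lift pod w x p - Defs.lift pod w S p))), S.
    move=> r [s' [hs' ->]]; rewrite /a !ThetaB !ipB.
    have := hlmo s' hs'; rewrite -/G; lra.
  have [g0|gn0] := eqVneq gamma 0.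
    have -> : y = x by apply/funext => p; rewrite /y g0 mul0r addr0.
    by rewrite /h g0 expr2 !mul0r subr0 addr0.
  set r := 2 / gamma ^+ 2 * (Psi (Theta pe y) - Psi (Theta pe x)
             - ip G (Theta pe (fun p => y p - x p))).
  have rC : r <= curv pod pe d Psi w.
    apply: sup_upper_bound; last first.
      by exists x, S, gamma; split => //; rewrite lt_def gn0.
    split; last exact: hCfin.
    by exists r, x, S, gamma; split => //; rewrite lt_def gn0.
  have eq : Psi (Theta pe y) = Psi (Theta pe x) + gamma * a + gamma ^+ 2 / 2 * r.
    by rewrite /r hyx ipZ -/a; field.
  have t1 : gamma * fwgap_blk pod pe d Psi x w <= gamma * (- a) by rewrite ler_wpM2l.
  have t2 : gamma ^+ 2 / 2 * r <= gamma ^+ 2 / 2 * curv pod pe d Psi w.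
    by rewrite ler_wpM2l // divr_ge0 // exprn_ge0.
  rewrite /h eq; lra.
have hm0 : m%:R != 0 :> R by rewrite pnatr_eq0 -lt0n.
have stepB : forall I : {set W}, #|I| == m ->
    Psi (Theta pe (fun p => x p + gamma * sofw_dir pod m I (s I) x p))
    <= m%:R^-1 * \sum_(w in I) h w.
  move=> I hI.
  have e : (fun p => x p + gamma * sofw_dir pod m I (s I) x p)
     = (fun p => \sum_(w <- enum I) m%:R^-1 *
          (x p + gamma * (Defs.lift pod w (s I w) p - Defs.lift pod w x p))).
    apply/funext => p; rewrite /sofw_dir big_enum /=.
    have -> : \sum_(i in I) m%:R^-1 * (x p + gamma * (Defs.lift pod i (s I i) p - Defs.lift pod i x p))
      = m%:R^-1 * (x p *+ m + gamma * \sum_(i in I) (Defs.lift pod i (s I i) p - Defs.lift pod i x p)).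
      by rewrite -mulr_sumr big_split /= sumr_const (eqP hI) mulr_sumr.
    rewrite -mulr_natr.
    by field.
  rewrite e Theta_sum.
  apply: le_trans (@jensen R ne Psi W hconv _ _ _ _ _) _.
  - by move=> w _; rewrite invr_ge0 ler0n.
  - by rewrite big_enum sumr_const /= (eqP hI) -[_ *+ m]mulr_natr mulVf.
  rewrite big_enum -mulr_sumr ler_wpM2l ?invr_ge0 ?ler0n //.
  by apply: ler_sum => w wI; apply: stepA.
have hCnt : #|[set I : {set W} | #|I| == m]| = 'C(#|W|, m) by rewrite card_draws.
rewrite hCnt.
have hCpos : (0 < 'C(#|W|, m))%N by rewrite bin_gt0.
apply: (le_trans (y := (\sum_(I : {set W} | #|I| == m) m%:R^-1 * \sum_(w in I) h w)
     / 'C(#|W|, m)%:R)).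
  by rewrite ler_wpM2r ?invr_ge0 ?ler0n //; apply: ler_sum => I hI; apply: stepB.
have ex : \sum_(I : {set W} | #|I| == m) m%:R^-1 * \sum_(w in I) h w
   = m%:R^-1 * ('C(#|W|.-1, m.-1)%:R * \sum_w h w).
  rewrite -mulr_sumr; congr (_ * _).
  under eq_bigr do rewrite big_mkcond /=.
  rewrite exchange_big /= mulr_sumr; apply: eq_bigr => w _.
  rewrite -(cnt W m w hm1) natr_sum mulr_suml; apply: eq_bigr => I _.
  by case: (w \in I); rewrite ?mul1r ?mul0r.
have hsum : \sum_w h w = #|W|%:R * Psi (Theta pe x) - gamma * fwgap pod pe d Psi x
    + gamma ^+ 2 / 2 * \sum_w curv pod pe d Psi w.
  rewrite /h /fwgap !big_split /= sumrN -!mulr_sumr sumr_const mulr_natl.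
  by [].
have hbin : (m * 'C(#|W|, m) = #|W| * 'C(#|W|.-1, m.-1))%N.
  by case: m hm1 {hm2 hs stepB hm0 hCpos hCnt ex} => // k _; rewrite mul_bin_diag.
have hR : m%:R * 'C(#|W|, m)%:R = #|W|%:R * 'C(#|W|.-1, m.-1)%:R :> R.
  by rewrite -!natrM hbin.
have hN : #|W|%:R != 0 :> R by rewrite pnatr_eq0 -lt0n.
have hC : 'C(#|W|, m)%:R != 0 :> R by rewrite pnatr_eq0 -lt0n.
have hc : 'C(#|W|.-1, m.-1)%:R = m%:R * 'C(#|W|, m)%:R / #|W|%:R :> R.
  by rewrite hR; field.
rewrite ex hsum hc le_eqVlt; apply/orP; left; apply/eqP.
move: hm0 hN hC; set a := m%:R; set b := #|W|%:R; set c := 'C(#|W|, m)%:R => ha hb hc0.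
set t := Psi (Theta pe x). set u := fwgap pod pe d Psi x. set v := \sum_w curv pod pe d Psi w.
clearbody a b c t u v. clear -ha hb hc0. by field; rewrite ha hb hc0.
Qed.
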